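(* Let $p$ be a prime, $d$ a positive integer, and $\alpha>1-\frac{1}{d}\left(1-\frac{1}{p}\right)$. Let $S\subseteq\{1,2,\dots,p\}$ with $|S|\ge\alpha p$, and let $A=S+p\mathbb{Z}=\{s+pn : s\in S,\ n\in\mathbb{Z}\}$. Then \[h(A^d)\le |S|^d.\]
   Context: For a set $X\subseteq\mathbb{R}^d$, the Helly number $h(X)$ is the smallest $h$ such that the following holds: for every finite family $\mathcal{F}$ of convex sets in $\mathbb{R}^d$, if every $h$ or fewer sets of $\mathcal{F}$ have a point of $X$ in their intersection, then the intersection of all sets of $\mathcal{F}$ contains a point of $X$. If no such $h$ exists, $h(X)=\infty$. $A^d$ denotes the $d$-fold Cartesian product of $A$. *)

(* Defs.v *)
From HB Require Import structures.
From mathcomp Require Import all_boot all_order all_algebra.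
From mathcomp Require Import reals.
Set Implicit Arguments. Unset Strict Implicit. Unset Printing Implicit Defensive.
Import Order.TTheory GRing.Theory Num.Theory.
Local Open Scope ring_scope.

Definition convex_set (R : realType) (d : nat) (C : 'rV[R]_d -> Prop) : Prop :=
  forall x y : 'rV[R]_d, C x -> C y ->
    forall t : R, 0 <= t -> t <= 1 -> C ((1 - t) *: x + t *: y).

Definition helly_prop (R : realType) (d : nat) (X : 'rV[R]_d -> Prop) (h : nat)
  : Prop :=
  forall (I : finType) (C : I -> 'rV[R]_d -> Prop),
    (forall i, convex_set (C i)) ->
    (forall J : {set I}, (#|J| <= h)%N ->
        exists x, X x /\ forall i, i \in J -> C i x) ->
    exists x, X x /\ forall i, C i x.

(* h(X) <= n : the Helly number (smallest h with the Helly property) is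
   finite and at most n. *)
Definition helly_number_le (R : realType) (d : nat) (X : 'rV[R]_d -> Prop)
  (n : nat) : Prop :=
  exists h : nat, (h <= n)%N /\ helly_prop X h.

Definition periodic_set (R : realType) (p : nat) (S : nat -> Prop) (x : R)
  : Prop :=
  exists (s : nat) (n : int), S s /\ x = (s%:Z + p%:Z * n)%:~R.

Definition cart_pow (R : realType) (d : nat) (A : R -> Prop) (x : 'rV[R]_d)
  : Prop :=
  forall i : 'I_d, A (x ord0 i).

(* Main.v *)
Require Import Defs.
From HB Require Import structures.
From mathcomp Require Import all_boot all_order all_algebra.
From mathcomp Require Import reals.
From mathcomp Require Import boolp.
From mathcomp Require Import ring lra zify.
Set Implicit Arguments. Unset Strict Implicit. Unset Printing Implicit Defensive.
Import Order.TTheory GRing.Theory Num.Theory.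
Local Open Scope ring_scope.

Section Conv.
Variables (R : realType) (d : nat) (I : finType).
Local Notation vec := 'rV[R]_d.

Definition inconv (P : {set I}) (y : I -> vec) (z : vec) : Prop :=
  exists lam : I -> R, [/\ forall j, 0 <= lam j, forall j, j \notin P -> lam j = 0,
     \sum_j lam j = 1 & z = \sum_j lam j *: y j].

Definition upd (y : I -> vec) (a : I) (z : vec) : I -> vec :=
  fun i => if i == a then z else y i.

Lemma inconv_vert (P : {set I}) (y : I -> vec) j : j \in P -> inconv P y (y j).
Proof.
move=> jP; exists (fun i => (i == j)%:R); split.
- by move=> i; rewrite ler0n.
- by move=> i iP; case: eqP => // ij; rewrite ij jP in iP.
- by rewrite (bigD1 j) //= eqxx big1 ?addr0 // => i /negbTE ->.
- rewrite (bigD1 j) //= eqxx scale1r big1 ?addr0 // => i /negbTE ->.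
  by rewrite scale0r.
Qed.

Lemma inconv_sub (P P' : {set I}) (y : I -> vec) z : P \subset P' -> inconv P y z -> inconv P' y z.
Proof.
move=> sPP' [lam [l0 lP l1 lz]]; exists lam; split => // j jP'.
apply: lP; apply: contra jP'; exact: (subsetP sPP').
Qed.

Lemma inconv_trans (P P' : {set I}) (y y' : I -> vec) z :
  (forall j, j \in P' -> inconv P y (y' j)) -> inconv P' y' z -> inconv P y z.
Proof.
move=> hy [lam [l0 lP l1 ->]].
have hex : forall j, exists m : I -> R, j \in P' ->
   [/\ forall i, 0 <= m i, forall i, i \notin P -> m i = 0,
     \sum_i m i = 1 & y' j = \sum_i m i *: y i].
  move=> j; case: (boolP (j \in P')) => jP.
    by have [m hm] := hy j jP; exists m.
  by exists (fun _ => 0).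
have [mu hmu] := choice hex.
exists (fun i => \sum_j lam j * mu j i); split.
- move=> i; apply: sumr_ge0 => j _.
  have [jP|jP] := boolP (j \in P').
    by have [m0 _ _ _] := hmu j jP; rewrite mulr_ge0.
  by rewrite lP // mul0r.
- move=> i iP; apply: big1 => j _.
  have [jP|jP] := boolP (j \in P').
    by have [_ mP _ _] := hmu j jP; rewrite mP // mulr0.
  by rewrite lP // mul0r.
- rewrite exchange_big /= -l1; apply: eq_bigr => j _.
  have [jP|jP] := boolP (j \in P').
    by have [_ _ m1 _] := hmu j jP; rewrite -mulr_sumr m1 mulr1.
  by rewrite lP // big1 // => i _; rewrite mul0r.
- under [RHS]eq_bigr do rewrite scaler_suml.
  rewrite exchange_big /=; apply: eq_bigr => j _.
  have [jP|jP] := boolP (j \in P').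
    have [_ _ _ ->] := hmu j jP; rewrite scaler_sumr.
    by apply: eq_bigr => i _; rewrite scalerA.
  by rewrite lP // scale0r big1 // => i _; rewrite mul0r scale0r.
Qed.

Lemma inconv_ext (P : {set I}) (y y' : I -> vec) z : (forall j, j \in P -> y j = y' j) ->
  inconv P y z -> inconv P y' z.
Proof.
move=> e; apply: inconv_trans => j jP; rewrite e //; exact: inconv_vert.
Qed.

Lemma inconv_convex (P : {set I}) (y : I -> vec) : convex_set (inconv P y).
Proof.
move=> x1 x2 [l [l0 lP l1 ->]] [m [m0 mP m1 ->]] t t0 t1.
exists (fun j => (1 - t) * l j + t * m j); split.
- by move=> j; rewrite addr_ge0 // mulr_ge0 // subr_ge0.
- by move=> j jP; rewrite lP // mP // !mulr0 addr0.
- by rewrite big_split /= -!mulr_sumr l1 m1 !mulr1 subrK.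
- rewrite !scaler_sumr -big_split /=; apply: eq_bigr => j _.
  by rewrite !scalerA -!scalerDl; congr (_ *: _); ring.
Qed.

Lemma inconv_seg (P : {set I}) (y : I -> vec) a b (t : R) : a \in P -> b \in P -> 0 <= t -> t <= 1 ->
  inconv P y ((1 - t) *: y a + t *: y b).
Proof.
move=> aP bP t0 t1; apply: inconv_convex => //; exact: inconv_vert.
Qed.

Lemma inconv_upd (P : {set I}) (y : I -> vec) c z w : inconv P y z -> inconv P (upd y c z) w -> inconv P y w.
Proof.
move=> hz; apply: inconv_trans => j jP; rewrite /upd; case: eqP => _ //.
exact: inconv_vert.
Qed.


Lemma sum_bigD1_split (F : I -> R) a : \sum_j F j = F a + \sum_j (if j == a then 0 else F j).
Proof.
rewrite (bigD1 a) //= [in RHS](bigD1 a) //= eqxx add0r; congr (_ + _).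
by apply: eq_bigr => j /negbTE ->.
Qed.

Lemma sumv_bigD1_split (F : I -> vec) a : \sum_j F j = F a + \sum_j (if j == a then 0 else F j).
Proof.
rewrite (bigD1 a) //= [in RHS](bigD1 a) //= eqxx add0r; congr (_ + _).
by apply: eq_bigr => j /negbTE ->.
Qed.

Lemma conv_in_convex (C : vec -> Prop) : convex_set C ->
  forall (P : {set I}) (y : I -> vec) z, (forall j, j \in P -> C (y j)) -> inconv P y z -> C z.
Proof.
move=> cC P; move: {2}#|P| (erefl #|P|) => n; elim: n P => [|n IH] P cP y z yC [lam [l0 lP l1 ->]].
  move/eqP: cP; rewrite cards_eq0 => /eqP P0.
  move: l1; rewrite big1 => [/eqP|j _]; first by rewrite eq_sym oner_eq0.
  by rewrite lP // P0 inE.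
have /card_gt0P [i iP] : (0 < #|P|)%N by rewrite cP.
have li1 : lam i <= 1.
  by rewrite -l1 (bigD1 i) //= lerDl sumr_ge0.
have hs : \sum_j (if j == i then 0 else lam j) = 1 - lam i.
  by have := sum_bigD1_split lam i; rewrite l1 => e; lra.
have [li|li] := eqVneq (lam i) 1.
  have h0 : forall j, j != i -> lam j = 0.
    move=> j ji; move: hs; rewrite li subrr => /eqP; rewrite psumr_eq0; last first.
      by move=> k _; case: ifP.
    by move/allP/(_ j (mem_index_enum _)); rewrite (negbTE ji) => /eqP.
  rewrite (sumv_bigD1_split _ i) li scale1r big1 ?addr0; first exact: yC.
  by move=> j; case: ifPn => // /h0 ->; rewrite scale0r.
have li1' : lam i < 1 by rewrite lt_neqAle li li1.
have c0 : 0 < 1 - lam i by rewrite subr_gt0.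
set mu := fun j => (if j == i then 0 else lam j) / (1 - lam i).
have hz : C (\sum_j mu j *: y j).
  apply: (IH (P :\ i)).
  - by move: cP; rewrite (cardsD1 i) iP add1n => -[].
  - by move=> j; rewrite in_setD1 => /andP [_]; exact: yC.
  exists mu; split => //.
  - by move=> j; rewrite /mu; case: ifP => _; rewrite ?mul0r // divr_ge0 // ltW.
  - move=> j; rewrite in_setD1 negb_and negbK /mu => /orP [/eqP ->|jP]; first by rewrite eqxx mul0r.
    by rewrite lP // if_same mul0r.
  - by rewrite /mu -mulr_suml hs mulfV // gt_eqF.
have -> : \sum_j lam j *: y j = (1 - lam i) *: (\sum_j mu j *: y j) + lam i *: y i.
  rewrite (sumv_bigD1_split _ i) addrC scaler_sumr; congr (_ + _).
  apply: eq_bigr => j _; rewrite /mu scalerA; case: ifP => _; first by rewrite mul0r mulr0 !scale0r.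
  by rewrite mulrCA mulfV ?mulr1 // gt_eqF.
by apply: cC => //; exact: yC.
Qed.

Lemma inconv_strict (J : {set I}) (y : I -> vec) a b (t : R) :
  a \in J -> b \in J -> a != b -> 0 < t -> t <= 1 ->
  inconv J (upd y a ((1 - t) *: y a + t *: y b)) (y a) -> inconv (J :\ a) y (y a).
Proof.
move=> aJ bJ ab t0 t1 [lam [l0 lP l1 eya]].
have la1 : lam a <= 1 by rewrite -l1 (bigD1 a) //= lerDl sumr_ge0.
set c := 1 - lam a * (1 - t).
have c0 : 0 < c by rewrite /c subr_gt0; have := l0 a; nra.
set lam' := fun j => (if j == a then 0 else lam j) + (if j == b then lam a * t else 0).
have hsb : forall (F : I -> R), \sum_j (if j == b then F j else 0) = F b.
  by move=> F; rewrite (bigD1 b) //= eqxx big1 ?addr0 // => j /negbTE ->.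
have hsbv : forall (F : I -> vec), \sum_j (if j == b then F j else 0) = F b.
  by move=> F; rewrite (bigD1 b) //= eqxx big1 ?addr0 // => j /negbTE ->.
have hs : \sum_j lam' j = c.
  rewrite big_split /= (hsb (fun _ => lam a * t)).
  have := sum_bigD1_split lam a; rewrite l1 => e.
  rewrite /c; lra.
have hv : \sum_j lam' j *: y j = c *: y a.
  under eq_bigr do rewrite scalerDl.
  rewrite big_split /=.
  have -> : \sum_j (if j == b then lam a * t else 0) *: y j = (lam a * t) *: y b.
    rewrite -(hsbv (fun j => (lam a * t) *: y j)); apply: eq_bigr => j _.
    by case: ifP; rewrite ?scale0r.
  move: eya; rewrite (sumv_bigD1_split _ a) /upd eqxx => eya.
  have -> : \sum_j (if j == a then 0 else lam j) *: y j =
            \sum_j (if j == a then 0 else lam j *: (if j == a then (1 - t) *: y a + t *: y b else y j)).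
    by apply: eq_bigr => j _; case: ifP; rewrite ?scale0r.
  move: eya; rewrite scalerDr !scalerA; set S0 := \sum_j _.
  set k := lam a * (1 - t); set Ya := y a; set Yb := y b => eya.
  have e2 : Ya - k *: Ya = (lam a * t) *: Yb + S0.
    by rewrite {1}eya addrAC (addrAC (k *: Ya)) subrr add0r.
  by rewrite /c scalerBl scale1r e2 addrC mulrC.
exists (fun j => lam' j / c); split.
- move=> j; rewrite divr_ge0 ?(ltW c0) // /lam' addr_ge0 //; case: ifP => // _.
  by rewrite mulr_ge0 // ?ltW.
- move=> j; rewrite in_setD1 negb_and negbK /lam' => /orP [/eqP ->|jJ].
    by rewrite eqxx (negbTE ab) add0r mul0r.
  have jb : (j == b) = false by apply/negbTE; apply: contraNneq jJ => ->.
  by rewrite jb lP // addr0; case: ifP; rewrite mul0r.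
- by rewrite -mulr_suml hs mulfV // gt_eqF.
- under eq_bigr do rewrite mulrC -scalerA.
  by rewrite -scaler_sumr hv scalerA mulVf ?scale1r // gt_eqF.
Qed.

End Conv.

Lemma size_filter_neq (T : eqType) (x : T) (L : seq T) :
  x \in L -> (size [seq w <- L | w != x] < size L)%N.
Proof.
elim: L => //= a L IH; rewrite inE; have [->|ax] := eqVneq a x => /=.
  by move=> _; rewrite ltnS size_filter count_size.
by move=> /IH.
Qed.

Section Hoff.
Variables (R : realType) (d : nat) (I : finType).
Local Notation vec := 'rV[R]_d.
Variables (X : vec -> Prop) (J : {set I}).
Hypothesis J0 : (0 < #|J|)%N.
Hypothesis BP : forall y : I -> vec, (forall i, i \in J -> X (y i)) ->
  exists a b, [/\ a \in J, b \in J & a != b] /\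
  exists t z, [/\ 0 < t, t < 1, X z & z = (1 - t) *: y a + t *: y b].

Lemma vertex_witness (y : I -> vec) a : a \in J -> X (y a) -> inconv (J :\ a) y (y a) ->
  exists z, X z /\ forall i, i \in J -> inconv (J :\ i) y z.
Proof.
move=> aJ Xa ha; exists (y a); split => // i iJ.
have [->//|ia] := eqVneq i a.
by apply: inconv_vert; rewrite in_setD1 eq_sym ia.
Qed.

Lemma hoff N : forall y : I -> vec, (forall i, i \in J -> X (y i)) ->
  (exists L : seq vec, (size L <= N)%N /\ forall w, X w -> inconv J y w -> w \in L) ->
  exists z, X z /\ forall i, i \in J -> inconv (J :\ i) y z.
Proof.
elim: N => [|N IH] y hX [L [sL hL]].
  have [i iJ] := card_gt0P J0.
  have yL := hL _ (hX i iJ) (inconv_vert _ iJ).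
  by case: L sL hL yL => [|x L] // _ _; rewrite in_nil.
have [a [b [[aJ bJ ab] [t [z [t0 t1 Xz ez]]]]]] := BP hX.
have [ha|ha] := pselect (inconv (J :\ a) y (y a)).
  exact: vertex_witness aJ (hX a aJ) ha.
have [hb|hb] := pselect (inconv (J :\ b) y (y b)).
  exact: vertex_witness bJ (hX b bJ) hb.
have zJ : inconv J y z by rewrite ez; apply: inconv_seg => //; exact: ltW.
set L1 := [seq w <- L | w != y a].
have sL1 : (size L1 <= N)%N.
  by rewrite -ltnS; apply: leq_trans sL; apply: size_filter_neq; apply: hL (hX a aJ) (inconv_vert _ aJ).
set Y1 := upd y a z.
have cov1 : forall w, X w -> inconv J Y1 w -> w \in L1.
  move=> w Xw hw; rewrite mem_filter; apply/andP; split.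
    apply/eqP => wa; apply: ha; apply: (inconv_strict aJ bJ ab t0 (ltW t1)).
    by rewrite -ez -wa.
  by apply: hL => //; exact: inconv_upd zJ hw.
have X1 : forall i, i \in J -> X (Y1 i) by move=> i iJ; rewrite /Y1 /upd; case: eqP => // _; exact: hX.
have [u [Xu hu]] := IH Y1 X1 (ex_intro _ L1 (conj sL1 cov1)).
set L2 := [seq w <- L | w != y b].
have sL2 : (size L2 <= N)%N.
  by rewrite -ltnS; apply: leq_trans sL; apply: size_filter_neq; apply: hL (hX b bJ) (inconv_vert _ bJ).
set Y2 := upd y b z.
have ez' : z = (1 - (1 - t)) *: y b + (1 - t) *: y a.
  by rewrite ez addrC; congr (_ *: _ + _); ring.
have cov2 : forall w, X w -> inconv J Y2 w -> w \in L2.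
  move=> w Xw hw; rewrite mem_filter; apply/andP; split.
    apply/eqP => wb; apply: hb.
    apply: (inconv_strict (a := b) (b := a) (t := 1 - t) bJ aJ); rewrite 1?eq_sym //.
    - by rewrite subr_gt0.
    - by rewrite lerBlDr lerDl ltW.
    by rewrite -ez' -wb.
  by apply: hL => //; exact: inconv_upd zJ hw.
have X2 : forall i, i \in J -> X (Y2 i) by move=> i iJ; rewrite /Y2 /upd; case: eqP => // _; exact: hX.
have [u' [Xu' hu']] := IH Y2 X2 (ex_intro _ L2 (conj sL2 cov2)).
set Y3 := upd (upd y a u') b u.
have X3 : forall i, i \in J -> X (Y3 i).
  by move=> i iJ; rewrite /Y3 /upd; case: eqP => // _; case: eqP => // _; exact: hX.
have Y3_1 : forall w, inconv J Y3 w -> inconv J Y1 w.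
  move=> w0; apply: inconv_trans => j jJ; rewrite /Y3 /upd; case: eqP => [_|jb].
    exact: inconv_sub (subsetDl _ _) (hu b bJ).
  case: eqP => [_|ja]; last by have := inconv_vert Y1 jJ; rewrite /Y1 /upd; case: eqP => // _; exact: hX.
  apply: inconv_trans (hu' a aJ) => l; rewrite in_setD1 => /andP [la lJ].
  rewrite /Y2 /upd; case: eqP => [_|lb].
    by have := inconv_vert Y1 aJ; rewrite /Y1 /upd eqxx.
  by have := inconv_vert Y1 lJ; rewrite /Y1 /upd (negbTE la).
have cov3 : forall w, X w -> inconv J Y3 w -> w \in L1.
  by move=> w Xw /Y3_1; exact: cov1.
have [v [Xv hv]] := IH Y3 X3 (ex_intro _ L1 (conj sL1 cov3)).
exists v; split => // i iJ.
have H1 : forall w, i != b -> inconv (J :\ i) Y1 w -> inconv (J :\ i) y w.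
  move=> w ib; have [->|ia] := eqVneq i a.
    by apply: inconv_ext => j; rewrite in_setD1 /Y1 /upd => /andP [/negbTE ->].
  apply: inconv_upd; rewrite ez; apply: inconv_seg; rewrite ?in_setD1 1?eq_sym ?ia ?ib ?aJ ?bJ //.
  exact: (ltW t0). exact: (ltW t1).
have H2 : forall w1, i != a -> inconv (J :\ i) Y2 w1 -> inconv (J :\ i) y w1.
  move=> w1 ia; have [->|ib] := eqVneq i b.
    by apply: inconv_ext => j; rewrite in_setD1 /Y2 /upd => /andP [/negbTE ->].
  apply: inconv_upd; rewrite ez; apply: inconv_seg; rewrite ?in_setD1 1?eq_sym ?ia ?ib ?aJ ?bJ //.
  exact: (ltW t0). exact: (ltW t1).
apply: inconv_trans (hv i iJ) => j; rewrite in_setD1 => /andP [ji jJ].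
rewrite /Y3 /upd; case: eqP => [jb|_].
  by apply: H1; [rewrite -jb eq_sym | exact: hu].
case: eqP => [ja|_]; last by apply: inconv_vert; rewrite in_setD1 ji.
by apply: H2; [rewrite -ja eq_sym | exact: hu'].
Qed.

End Hoff.

Lemma helly_gen (R : realType) (d : nat) (X : 'rV[R]_d -> Prop) (k : nat) :
  (forall (I : finType) (J : {set I}) (y : I -> 'rV[R]_d), (k < #|J|)%N ->
     (forall i, i \in J -> X (y i)) ->
     exists a b, [/\ a \in J, b \in J & a != b] /\
     exists t z, [/\ 0 < t, t < 1, X z & z = (1 - t) *: y a + t *: y b]) ->
  (forall (I : finType) (J : {set I}) (y : I -> 'rV[R]_d),
     (forall i, i \in J -> X (y i)) ->
     exists L : seq 'rV[R]_d, forall w, X w -> inconv J y w -> w \in L) ->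
  helly_prop X k.
Proof.
move=> BP FIN I C Cc H.
suff: forall n (J : {set I}), (#|J| <= n)%N -> exists x, X x /\ forall i, i \in J -> C i x.
  by move=> /(_ #|I| setT); rewrite cardsT leqnn => /(_ isT) [x [Xx hx]]; exists x; split => // i; apply: hx; rewrite inE.
elim=> [|n IH] J cJ.
  by apply: H; rewrite (leq_trans cJ).
have [cJk|cJk] := leqP #|J| k; first exact: H.
have hex : forall i, exists x, i \in J -> X x /\ forall j, j \in J :\ i -> C j x.
  move=> i; case: (boolP (i \in J)) => iJ; last by exists 0.
  have [x hx] : exists x, X x /\ forall j, j \in J :\ i -> C j x.
    apply: IH; move: cJ; rewrite (cardsD1 i J) iJ add1n ltnS //.
  by exists x.
have [y hy] := choice hex.
have Xy : forall i, i \in J -> X (y i) by move=> i /(hy i) [].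
have J0 : (0 < #|J|)%N by rewrite (leq_ltn_trans _ cJk).
have [L hL] := FIN I J y Xy.
have [z [Xz hz]] := hoff (N := size L) J0 (fun y => BP I J y cJk) Xy (ex_intro _ L (conj (leqnn _) hL)).
exists z; split => // i iJ.
apply: (conv_in_convex (Cc i)) (hz i iJ) => j; rewrite in_setD1 => /andP [ji jJ].
by have [_ ] := hy j jJ; apply; rewrite in_setD1 eq_sym ji.
Qed.

Definition rmod (p : nat) (a : int) : nat := (absz ((a - 1) %% p)%Z).+1.

Section NT.
Variable p : nat.
Hypothesis p0 : (0 < p)%N.

Lemma rmodE a : (rmod p a)%:Z = ((a - 1) %% p)%Z + 1.
Proof.
rewrite /rmod -addn1 PoszD gez0_abs // modz_ge0 //.
by rewrite eqz_nat -lt0n.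
Qed.

Lemma rmod_le a : (0 < rmod p a <= p)%N.
Proof.
apply/andP; split => //.
have h : ((a - 1) %% p < p%:Z)%Z by apply: ltz_pmod; rewrite ltz_nat.
have := rmodE a; lia.
Qed.

Lemma rmodP a : a = (rmod p a)%:Z + p%:Z * ((a - 1) %/ p)%Z.
Proof.
rewrite rmodE; have := divz_eq (a - 1) p; lia.
Qed.

Lemma rmod_period a m : rmod p (a + p%:Z * m) = rmod p a.
Proof.
apply/eqP; rewrite -eqz_nat rmodE rmodE; apply/eqP; congr (_ + _).
have -> : a + p%:Z * m - 1 = m * p%:Z + (a - 1) by ring.
by rewrite modzMDl.
Qed.

Lemma rmod_small (s : nat) : (0 < s <= p)%N -> rmod p s = s.
Proof.
move=> hs; apply/eqP; rewrite -eqz_nat rmodE modz_small; first by apply/eqP; ring.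
apply/andP; split; lia.
Qed.

Lemma rmod_dvd a b : rmod p a = rmod p b -> (p%:Z %| a - b)%Z.
Proof.
move=> e; have ea := rmodP a; have eb := rmodP b.
apply/dvdzP; exists (((a - 1) %/ p)%Z - ((b - 1) %/ p)%Z).
rewrite {1}ea {1}eb e; ring.
Qed.

End NT.

Section Between.
Variables (p d : nat) (S : {set 'I_p.+1}).
Hypothesis pr : prime p.
Hypothesis Spos : forall s : 'I_p.+1, s \in S -> (0 < s)%N.
Hypothesis hd : (d * (p - #|S|) < p.-1)%N.

Lemma bad_card (s : 'I_p.+1) (v : int) : s \in S ->
  (#|[set j : 'I_p | (0 < j)%N && (inord (rmod p (s%:Z + (j : nat)%:Z * v)) \notin S)]| <= p - #|S|)%N.
Proof.
move=> sS; have p0 : (0 < p)%N by exact: prime_gt0.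
case: (boolP (p%:Z %| v)%Z) => [/dvdzP [q ->]|ndv].
  suff -> : [set j : 'I_p | (0 < j)%N && (inord (rmod p (s%:Z + (j : nat)%:Z * (q * p%:Z))) \notin S)] = set0.
    by rewrite cards0.
  apply/setP => j; rewrite !inE.
  have -> : s%:Z + (j : nat)%:Z * (q * p%:Z) = s%:Z + p%:Z * ((j : nat)%:Z * q) by ring.
  rewrite rmod_period // rmod_small //; last by rewrite Spos // -ltnS ltn_ord.
  by rewrite inord_val sS andbF.
set f := fun j : 'I_p => (inord (rmod p (s%:Z + (j : nat)%:Z * v)) : 'I_p.+1).
have rl : forall a, (rmod p a < p.+1)%N.
  by move=> a; have /andP[_ h] := rmod_le p0 a; rewrite ltnS.
have finj : injective f.
  move=> j1 j2 /(congr1 val); rewrite /f /= !inordK ?rl //.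
  move/rmod_dvd => /(_ p0).
  have -> : s%:Z + (j1 : nat)%:Z * v - (s%:Z + (j2 : nat)%:Z * v) = ((j1 : nat)%:Z - (j2 : nat)%:Z) * v by ring.
  rewrite dvdzE abszM Euclid_dvdM // => /orP [h|h]; last by move: ndv; rewrite dvdzE h.
  apply: val_inj => /=.
  case: (posnP `|(j1 : nat)%:Z - (j2 : nat)%:Z|%N) => [/eqP|pos].
    by rewrite absz_eq0 subr_eq0 eqz_nat => /eqP.
  have := dvdn_leq pos h; have := ltn_ord j1; have := ltn_ord j2; lia.
set B := [set j : 'I_p | _].
have -> : #|B| = #|f @: B| by rewrite card_imset.
apply: (@leq_trans #|~: S :\ ord0|).
  apply: subset_leq_card; apply/subsetP => t /imsetP [j]; rewrite inE => /andP [j0 jS] ->.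
  rewrite !inE jS andbT; apply/eqP => /(congr1 val); rewrite /f /= inordK.
    by have /andP[h _] := rmod_le p0 (s%:Z + (j : nat)%:Z * v); case: (rmod _ _) h.
  exact: rl.
have := cardsD1 ord0 (~: S); rewrite !inE.
have -> : (ord0 \in S) = false by apply/negbTE/negP => /Spos.
rewrite cardsCs setCK card_ord /= add1n => e.
have := subset_leq_card (subsetT S); rewrite cardsT card_ord.
move: e; set x := #|_ :\ _|; set y := #|S|; lia.
Qed.

Lemma between (s : 'I_d -> 'I_p.+1) (v : 'I_d -> int) : (forall c, s c \in S) ->
  exists j : nat, (0 < j < p)%N /\ forall c, inord (rmod p ((s c)%:Z + j%:Z * v c)) \in S.
Proof.
move=> sS; have p0 : (0 < p)%N by exact: prime_gt0.
set Bad := fun c => [set j : 'I_p | (0 < j)%N && (inord (rmod p ((s c)%:Z + (j : nat)%:Z * v c)) \notin S)].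
set Pos := [set j : 'I_p | (0 < j)%N].
have cPos : #|Pos| = p.-1.
  have := cardsD1 (Ordinal p0) [set: 'I_p]; rewrite cardsT card_ord inE.
  have -> : [set: 'I_p] :\ Ordinal p0 = Pos.
    by apply/setP => j; rewrite !inE andbT lt0n.
  set q := #|Pos|; rewrite /= => e; lia.
have hU : (#|\bigcup_(c < d) Bad c| < #|Pos|)%N.
  apply: leq_ltn_trans (unstable.card_big_setU _ _ _) _.
  rewrite cPos; apply: leq_ltn_trans hd.
  apply: (@leq_trans (\sum_(c < d) (p - #|S|))); last by rewrite sum_nat_const card_ord.
  by apply: leq_sum => c _; apply: bad_card.
have : ~~ (Pos \subset \bigcup_(c < d) Bad c).
  by apply/negP => /subset_leq_card; rewrite leqNgt hU.
case/subsetPn => j; rewrite inE => j0 jU.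
exists j; split; first by rewrite j0 ltn_ord.
move=> c; apply/negPn/negP => h; move/negP: jU; apply.
by apply/bigcupP; exists c => //; rewrite inE j0 h.
Qed.

End Between.

Section Spec.
Variables (R : realType) (p d : nat) (S : {set 'I_p.+1}).
Hypothesis pr : prime p.
Hypothesis Spos : forall s : 'I_p.+1, s \in S -> (0 < s)%N.
Hypothesis hd : (d * (p - #|S|) < p.-1)%N.

Local Notation X := (@cart_pow R d (@periodic_set R p (fun s : nat => exists2 t : 'I_p.+1, t \in S & s = t))).

Lemma memX (w : 'rV[R]_d) : X w -> forall c, exists q : 'I_p.+1 * int,
  q.1 \in S /\ w ord0 c = (((q.1 : nat)%:Z + p%:Z * q.2)%:~R : R).
Proof.
move=> hw c; have [s [n [[t tS ->] e]]] := hw c.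
by exists (t, n).
Qed.

Lemma natz_R (n : nat) : ((n%:Z)%:~R : R) = n%:R.
Proof. by []. Qed.

Lemma BP_A (I : finType) (J : {set I}) (y : I -> 'rV[R]_d) :
  (#|S| ^ d < #|J|)%N -> (forall i, i \in J -> X (y i)) ->
  exists a b, [/\ a \in J, b \in J & a != b] /\
  exists t z, [/\ 0 < t, t < 1, X z & z = (1 - t) *: y a + t *: y b].
Proof.
move=> cJ hX; have p0 : (0 < p)%N by exact: prime_gt0.
have hF0 : forall i, exists F : 'I_d -> 'I_p.+1 * int, i \in J -> forall c,
    (F c).1 \in S /\ y i ord0 c = ((((F c).1 : nat)%:Z + p%:Z * (F c).2)%:~R : R).
  move=> i; case: (boolP (i \in J)) => iJ; last by exists (fun _ => (ord0, 0)).
  have [G hG] := choice (memX (hX i iJ)).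
  by exists G => _.
have [F hF] := choice hF0.
set f := fun i => [ffun c => (F i c).1].
have : [exists a in J, exists b in J, (a != b) && (f a == f b)].
  apply: contraT => hn.
  have inj : {in J &, injective f}.
    move=> a b aJ bJ fab; apply/eqP; apply: contraNT hn => ab.
    by apply/exists_inP; exists a => //; apply/exists_inP; exists b => //; rewrite ab fab eqxx.
  have := card_in_imset inj.
  have : (#|f @: J| <= #|S| ^ d)%N.
    have -> : (#|S| ^ d)%N = #|ffun_on_mem 'I_d (mem S)| by rewrite card_ffun_on card_ord.
    apply: subset_leq_card.
    apply/subsetP => g /imsetP [i iJ ->]; apply/ffun_onP => c; rewrite ffunE.
    by case: (hF i iJ c).
  lia.
case/exists_inP => a aJ /exists_inP [b bJ /andP [ab /eqP fab]].
set s := fun c => (F a c).1.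
have sb : forall c, (F b c).1 = s c.
  by move=> c; have := congr1 (fun g : {ffun _ -> _} => g c) fab; rewrite !ffunE.
have [j [/andP [j0 jp] hjS]] := @between p d S pr Spos hd s (fun c => (F b c).2 - (F a c).2)
  (fun c => proj1 (hF a aJ c)).
have pR0 : (0 : R) < p%:R by rewrite ltr0n.
set t : R := j%:R / p%:R.
exists a, b; split => //; exists t, ((1 - t) *: y a + t *: y b); split => //.
- by rewrite /t divr_gt0 // ltr0n.
- by rewrite /t ltr_pdivrMr // mul1r ltr_nat.
move=> c.
set r := rmod p ((s c)%:Z + j%:Z * ((F b c).2 - (F a c).2)).
have rS : (inord r : 'I_p.+1) \in S by exact: hjS.
have rle : (r < p.+1)%N by have /andP [_ h] := rmod_le p0 ((s c)%:Z + j%:Z * ((F b c).2 - (F a c).2)); rewrite ltnS.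
have E := rmodP p0 ((s c)%:Z + j%:Z * ((F b c).2 - (F a c).2)).
exists r, (((((s c)%:Z + j%:Z * ((F b c).2 - (F a c).2)) - 1) %/ p)%Z + (F a c).2); split.
  by exists (inord r) => //; rewrite inordK.
have Eint : (r%:Z + p%:Z * (((((s c)%:Z + j%:Z * ((F b c).2 - (F a c).2)) - 1) %/ p)%Z + (F a c).2))
   = (s c)%:Z + p%:Z * (F a c).2 + j%:Z * ((F b c).2 - (F a c).2).
  rewrite /r; move: E; set q := (_ %/ _)%Z; lia.
rewrite Eint !mxE (proj2 (hF a aJ c)) (proj2 (hF b bJ c)) sb -/(s c).
rewrite !intrD !intrM !natz_R /t intrB.
field; exact: lt0r_neq0.
Qed.


Lemma le_sum_term (T : finType) (P : {pred T}) (F : T -> R) i :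
  (forall j, 0 <= F j) -> i \in P -> F i <= \sum_(j in P) F j.
Proof.
move=> F0 iP; rewrite (bigD1 i) //= lerDl; exact: sumr_ge0.
Qed.

Lemma FIN_A (I : finType) (J : {set I}) (y : I -> 'rV[R]_d) :
  (forall i, i \in J -> X (y i)) ->
  exists L : seq 'rV[R]_d, forall w, X w -> inconv J y w -> w \in L.
Proof.
move=> hX.
set M : R := \sum_(i in J) \sum_c `|y i ord0 c|.
have M0 : 0 <= M by apply: sumr_ge0 => i _; apply: sumr_ge0.
set B := Num.Def.archi_bound M.
have MB : M < B%:R by exact: archi_boundP.
exists (codom (fun g : {ffun 'I_d -> 'I_(B.*2).+1} => \row_c ((((g c : nat)%:Z - B%:Z)%:~R) : R))).
move=> w Xw [lam [l0 lP l1 ew]].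
have hb : forall c, `|w ord0 c| <= M.
  move=> c; rewrite ew summxE.
  apply: (le_trans (ler_norm_sum _ _ _)).
  apply: (@le_trans _ _ (\sum_j lam j * M)); last by rewrite -mulr_suml l1 mul1r.
  apply: ler_sum => j _; rewrite mxE normrM ger0_norm //.
  have [jJ|jJ] := boolP (j \in J); last by rewrite lP // !mul0r.
  apply: ler_wpM2l => //.
  have h1 : `|y j ord0 c| <= \sum_c' `|y j ord0 c'|.
    by rewrite (bigD1 c) //= lerDl sumr_ge0.
  have h2 : \sum_c' `|y j ord0 c'| <= M.
    rewrite /M (bigD1 j) //= lerDl; apply: sumr_ge0 => i _; exact: sumr_ge0.
  exact: le_trans h1 h2.
have [G hG] := choice (memX Xw).
set m := fun c => ((G c).1 : nat)%:Z + p%:Z * (G c).2.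
have mB : forall c, (`|m c| < B%:Z)%R.
  move=> c; rewrite -(ltr_int R) intr_norm -(proj2 (hG c)).
  exact: le_lt_trans (hb c) MB.
have -> : w = (fun g : {ffun 'I_d -> 'I_(B.*2).+1} => \row_c ((((g c : nat)%:Z - B%:Z)%:~R) : R))
   [ffun c => inord (absz (m c + B%:Z))].
  apply/rowP => c; rewrite mxE ffunE inordK; last by have := mB c; rewrite -addnn; move: (m c) => x; lia.
  rewrite (proj2 (hG c)); congr intmul.
  have := mB c; rewrite /m; lia.
exact: codom_f.
Qed.

End Spec.

Theorem corollary4 (R : realType) (p d : nat) (alpha : R)
  (S : {set 'I_p.+1}) :
  prime p -> (0 < d)%N ->
  alpha > 1 - d%:R^-1 * (1 - p%:R^-1) ->
  (forall s : 'I_p.+1, s \in S -> (0 < s)%N) ->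
  #|S|%:R >= alpha * p%:R ->
  helly_number_le
    (@cart_pow R d (@periodic_set R p (fun s : nat => exists2 t : 'I_p.+1, t \in S & s = t)))
    (#|S| ^ d).
Proof.
move=> pr d0 ha Spos hS.
have p1 := prime_gt1 pr.
have key : (d * p + 1 < d * #|S| + p)%N.
  rewrite -(ltr_nat R) !natrD !natrM.
  have D0 : (0 : R) < d%:R by rewrite ltr0n.
  have P0 : (0 : R) < p%:R by rewrite ltr0n (ltn_trans _ p1).
  have h1 : d%:R * p%:R * (1 - d%:R^-1 * (1 - p%:R^-1)) = d%:R * p%:R - p%:R + 1 :> R.
    by field; apply/andP; split; apply: lt0r_neq0.
  have h2 : d%:R * p%:R * (1 - d%:R^-1 * (1 - p%:R^-1)) < d%:R * p%:R * alpha.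
    by rewrite ltr_pM2l // mulr_gt0.
  have h3 : d%:R * (alpha * p%:R) <= d%:R * #|S|%:R by rewrite ler_pM2l.
  have e : d%:R * (alpha * p%:R) = d%:R * p%:R * alpha :> R by ring.
  lra.
have hd : (d * (p - #|S|) < p.-1)%N by rewrite mulnBr; nia.
exists (#|S| ^ d)%N; split => //.
apply: helly_gen.
  by move=> I J y; exact: BP_A.
by move=> I J y; exact: FIN_A.
Qed.
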